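(* Let $p\in(0,1/2]$ be a fixed constant. There exist positive constants $C, c$ depending only on $p$ such that the following holds. Let $d\le n$ be positive integers with $d=pn$, let $m$ be an integer with $n/2\le m\le n$, and let $v\in\mathbb{S}^{n-1}$ be a fixed vector. Let $M$ be a random $m\times n$ matrix whose rows are independent random vectors, each uniformly distributed on the set of vectors in $\{0,1\}^n$ with exactly $d$ ones. Then \[ \mathbb{P}\left(\|Mv\|_2\le c\sqrt{pn}\right)\le e^{-Cn}. \]
   Context: $\mathbb{S}^{n-1}=\{x\in\mathbb{R}^n:\|x\|_2=1\}$ is the Euclidean unit sphere and $\|\cdot\|_2$ the Euclidean norm. *)

(* Defs.v *)
From HB Require Import structures.
From mathcomp Require Import all_boot all_order all_algebra.
From mathcomp Require Import all_classical all_reals all_analysis.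
Set Implicit Arguments. Unset Strict Implicit. Unset Printing Implicit Defensive.
Import Order.TTheory GRing.Theory Num.Theory.
Local Open Scope ring_scope.

(* A random m x n matrix with rows indexed by 'I_m is encoded by the family
   S : {ffun 'I_m -> {set 'I_n}} of supports of its rows (each row is a
   0/1 vector; S i is the set of columns where row i has a one). *)
Definition bin_mx (R : realType) (m n : nat) (S : {ffun 'I_m -> {set 'I_n}})
  : 'M[R]_(m, n) := \matrix_(i, j) (j \in S i)%:R.

Definition vnorm (R : realType) (n : nat) (x : 'cV[R]_n) : R :=
  Num.sqrt (\sum_(i < n) x i 0 ^+ 2).

Definition rows_dsparse (m n d : nat) : {set {ffun 'I_m -> {set 'I_n}}} :=
  [set S : {ffun 'I_m -> {set 'I_n}} | [forall i, #|S i| == d]].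

(* Uniform measure on the product of the row spaces = independent rows,
   each uniform on the vectors of {0,1}^n with exactly d ones. *)
Definition unif_prob (R : realType) (T : finType) (Omega : {set T}) (E : pred T) : R :=
  #|[set x in Omega | E x]|%:R / #|Omega|%:R.
Arguments bin_mx {R m n}.
Arguments vnorm {R n}.
Arguments unif_prob {R T}.

(* Main.v *)
Require Import Defs.
From HB Require Import structures.
From mathcomp Require Import all_boot all_order all_algebra.
From mathcomp Require Import all_classical all_reals all_analysis.
From mathcomp Require Import ring lra zify.
Import Order.TTheory GRing.Theory Num.Theory.
Local Open Scope ring_scope.

Set Implicit Arguments. Unset Strict Implicit. Unset Printing Implicit Defensive.

Section Dsec.
Variable (R : realType) (n : nat) (v : 'I_n -> R).

Fixpoint Dsum (fs : seq ('I_n -> R)) (U : {set 'I_n}) : R :=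
  match fs with
  | [::] => 1
  | f :: fs' => \sum_(i in U) f i * Dsum fs' (U :\ i)
  end.

Definition Pw (k : nat) (U : {set 'I_n}) : R := \sum_(i in U) v i ^+ k.
Definition vp (k : nat) : 'I_n -> R := fun i => v i ^+ k.

Lemma Pw_D1 k (U : {set 'I_n}) (i : 'I_n) : i \in U -> Pw k (U :\ i) = Pw k U - v i ^+ k.
Proof. by move=> iU; rewrite /Pw (big_setD1 i iU) /= addrC addrK. Qed.

Lemma sum_poly4 (U : {set 'I_n}) (c1 c2 c3 c4 : R) :
  \sum_(i in U) (c1 * v i + c2 * v i ^+ 2 + c3 * v i ^+ 3 + c4 * v i ^+ 4)
  = c1 * Pw 1 U + c2 * Pw 2 U + c3 * Pw 3 U + c4 * Pw 4 U.
Proof.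
rewrite !big_split /= /Pw !mulr_sumr; congr (_ + _ + _ + _).

Qed.

Lemma D1 k (U : {set 'I_n}) : Dsum [:: vp k] U = Pw k U.
Proof. by rewrite /= /Pw; apply: eq_bigr => i _; rewrite mulr1. Qed.

Lemma D2 a b (U : {set 'I_n}) : Dsum [:: vp a; vp b] U = Pw a U * Pw b U - Pw (a + b) U.
Proof.
rewrite /=.
transitivity (\sum_(i in U) (Pw b U * v i ^+ a - v i ^+ (a + b))).
  apply: eq_bigr => i iU; rewrite -/(Dsum [:: vp b] (U :\ i)) D1 Pw_D1 //.
  by rewrite /vp exprD; ring.
by rewrite sumrB -mulr_sumr mulrC.
Qed.

Lemma D3 (U : {set 'I_n}) : Dsum [:: vp 1; vp 1; vp 1] U =
  Pw 1 U ^+ 3 - 3 * Pw 1 U * Pw 2 U + 2 * Pw 3 U.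
Proof.
rewrite [LHS]/=.
transitivity (\sum_(i in U) ((Pw 1 U ^+ 2 - Pw 2 U) * v i + (- 2 * Pw 1 U) * v i ^+ 2
   + 2 * v i ^+ 3 + 0 * v i ^+ 4)).
  apply: eq_bigr => i iU; rewrite -/(Dsum [:: vp 1; vp 1] (U :\ i)) D2 !Pw_D1 //.
  rewrite /vp; ring.
rewrite sum_poly4 /Pw; under [in RHS]eq_bigr do rewrite expr1.
rewrite -/(Pw 1 U); rewrite /Pw. under eq_bigr do rewrite expr1. ring.
Qed.

Lemma D2' a b c (U : {set 'I_n}) : (a + b)%N = c ->
  Dsum [:: vp a; vp b] U = Pw a U * Pw b U - Pw c U.
Proof. by move=> <-; apply: D2. Qed.

Lemma D211 (U : {set 'I_n}) : Dsum [:: vp 2; vp 1; vp 1] U =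
  (Pw 1 U ^+ 2 - Pw 2 U) * Pw 2 U - 2 * Pw 1 U * Pw 3 U + 2 * Pw 4 U.
Proof.
rewrite [LHS]/=.
transitivity (\sum_(i in U) (0 * v i + (Pw 1 U ^+ 2 - Pw 2 U) * v i ^+ 2
   + (- 2 * Pw 1 U) * v i ^+ 3 + 2 * v i ^+ 4)).
  apply: eq_bigr => i iU; rewrite -/(Dsum [:: vp 1; vp 1] (U :\ i)) D2 !Pw_D1 //.
  rewrite /vp; ring.
rewrite sum_poly4; ring.
Qed.

Lemma D4 (U : {set 'I_n}) : Dsum [:: vp 1; vp 1; vp 1; vp 1] U =
  Pw 1 U ^+ 4 - 6 * Pw 1 U ^+ 2 * Pw 2 U + 3 * Pw 2 U ^+ 2
  + 8 * Pw 1 U * Pw 3 U - 6 * Pw 4 U.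
Proof.
rewrite [LHS]/=.
transitivity (\sum_(i in U) ((Pw 1 U ^+ 3 - 3 * Pw 1 U * Pw 2 U + 2 * Pw 3 U) * v i
   + (- 3 * Pw 1 U ^+ 2 + 3 * Pw 2 U) * v i ^+ 2
   + (6 * Pw 1 U) * v i ^+ 3 + (-6) * v i ^+ 4)).
  apply: eq_bigr => i iU; rewrite -/(Dsum [:: vp 1; vp 1; vp 1] (U :\ i)) D3 !Pw_D1 //.
  rewrite /vp; ring.
rewrite sum_poly4; ring.
Qed.

Lemma Y4_expand (U : {set 'I_n}) : Pw 1 U ^+ 4 =
  Dsum [:: vp 1; vp 1; vp 1; vp 1] U + 6 * Dsum [:: vp 2; vp 1; vp 1] U
  + 4 * Dsum [:: vp 3; vp 1] U + 3 * Dsum [:: vp 2; vp 2] U + Dsum [:: vp 4] U.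
Proof. rewrite D4 D211 (@D2' 3 1 4) // (@D2' 2 2 4) // D1 /=; ring. Qed.

Lemma Y2_expand (U : {set 'I_n}) : Pw 1 U ^+ 2 =
  Dsum [:: vp 1; vp 1] U + Dsum [:: vp 2] U.
Proof. rewrite (@D2' 1 1 2) // D1 /=; ring. Qed.

End Dsec.

Fixpoint kap (k u d : nat) : nat :=
  match k with
  | 0 => 'C(u, d)
  | k'.+1 => match d with 0 => 0%N | d'.+1 => kap k' u.-1 d' end
  end.

Section Csec.
Variable (R : realType) (n : nat).

Lemma count_D (fs : seq ('I_n -> R)) : forall (U : {set 'I_n}) d,
  \sum_(A in [set A : {set 'I_n} | A \subset U & #|A| == d]) Dsum fs A
  = (kap (size fs) #|U| d)%:R * Dsum fs U.
Proof.
elim: fs => [|f fs IH] U d.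
  by rewrite /= sumr_const cards_draws mulr1.
case: d => [|d].
  rewrite /= mul0r; apply: big1 => A; rewrite inE => /andP[_ /eqP/cards0_eq ->].
  by rewrite big_set0.
rewrite [in RHS]/= mulr_sumr.
rewrite (eq_bigr (fun A : {set 'I_n} => \sum_i (if i \in A then f i * Dsum fs (A :\ i) else 0))); last by move=> A _; rewrite /= big_mkcond.
rewrite (exchange_big _ _ _ _ _ (fun (A : {set 'I_n}) (i : 'I_n) => if i \in A then f i * Dsum fs (A :\ i) else 0)) /= [RHS]big_mkcond /=; apply: eq_bigr => i _.
case: ifP => iU; last first.
  apply: big1 => A; rewrite inE => /andP[AU _]; case: ifP => // iA.
  by move: (fintype.subsetP AU i iA); rewrite iU.
rewrite -big_mkcondr /=.
rewrite (reindex_onto (fun B => i |: B) (fun A => A :\ i)) /=; last first.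
  by move=> A /andP[_ iA]; rewrite finset.setD1K.
transitivity (\sum_(B in [set B : {set 'I_n} | B \subset U :\ i & #|B| == d])
   f i * Dsum fs B).
  apply: eq_big => B.
    rewrite !inE eqxx orTb andbT.
    apply/idP/idP.
      move=> /andP[/andP[iBU cB] /eqP eB].
      have iB : i \notin B by rewrite -eB !inE eqxx.
      move: cB; rewrite cardsU1 iB add1n eqSS => ->; rewrite andbT.
      apply/fintype.subsetP => x xB; rewrite !inE; apply/andP; split.
        by apply: contraNneq iB => <-.
      by apply: (fintype.subsetP iBU); rewrite !inE xB orbT.
    move=> /andP[BU cB].
    have iB : i \notin B by apply/negP => /(fintype.subsetP BU); rewrite !inE eqxx.
    rewrite finset.setU1K // eqxx andbT cardsU1 iB add1n eqSS cB andbT.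
    apply/fintype.subsetP => x; rewrite !inE => /orP[/eqP -> // | xB].
    by move: (fintype.subsetP BU x xB); rewrite !inE => /andP[].
  by move=> /andP[_ /eqP ->].
rewrite -mulr_sumr IH (cardsD1 i U) iU add1n /=; ring.
Qed.
End Csec.

Lemma kap_rec t : forall u d, (kap t.+1 u d * (u - t) = (d - t) * kap t u d)%N.
Proof.
elim: t => [|t IH] u d.
  case: d => [|d] /=; first by lia.
  by rewrite !subn0 mulnC mul_bin_diag.
case: d => [|d] /=; first by lia.
change (kap t.+1 u.-1 d * (u - t.+1) = (d.+1 - t.+1) * kap t u.-1 d)%N.
rewrite subSS -IH; congr (_ * _); lia.
Qed.

Lemma kap_zero t : forall u d, (d <= t)%N -> kap t.+1 u d = 0%N.
Proof.
elim: t => [|t IH] u d.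
  by rewrite leqn0 => /eqP ->.
case: d => [|d] //= Hd; exact: IH.
Qed.

Lemma kap_le t u d : (d <= u)%N -> (t < u)%N -> (kap t.+1 u d * u <= d * kap t u d)%N.
Proof.
move=> du tu.
case: (leqP d t) => dt; first by rewrite kap_zero.
have h := kap_rec t u d.
have : (kap t.+1 u d * u * (u - t) <= d * kap t u d * (u - t))%N.
  rewrite mulnAC h.
  have e : ((d - t) * u <= d * (u - t))%N by nia.
  have -> : ((d - t) * kap t u d * u = ((d - t) * u) * kap t u d)%N by ring.
  have -> : (d * kap t u d * (u - t) = (d * (u - t)) * kap t u d)%N by ring.
  by rewrite leq_mul2r e orbT.
by rewrite leq_pmul2r // subn_gt0.
Qed.

Lemma kap1 u d : (kap 1 u d * u = d * kap 0 u d)%N.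
Proof. by have := kap_rec 0 u d; rewrite !subn0. Qed.

Lemma kap2_lb u d : (2 <= d)%N -> (d <= u)%N ->
  (d * d * kap 0 u d <= 2 * kap 2 u d * u * u)%N.
Proof.
move=> d2 du.
have h1 := kap_rec 1 u d. have h0 := kap1 u d.
have u1 : (0 < u - 1)%N by lia.
rewrite -(leq_pmul2r u1).
have -> : (2 * kap 2 u d * u * u * (u - 1) = 2 * (kap 2 u d * (u - 1)) * u * u)%N by ring.
rewrite h1.
have -> : (2 * ((d - 1) * kap 1 u d) * u * u = 2 * (d - 1) * (kap 1 u d * u) * u)%N by ring.
rewrite h0.
have -> : (2 * (d - 1) * (d * kap 0 u d) * u = d * kap 0 u d * (2 * (d - 1) * u))%N by ring.
have -> : (d * d * kap 0 u d * (u - 1) = d * kap 0 u d * (d * (u - 1)))%N by ring.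
rewrite leq_mul2l; apply/orP; right.
nia.
Qed.

Section Key.
Variable R : realType.

Lemma key_ineq (p N k2 k3 k4 S P3 P4 : R) :
  0 < p -> p <= 1/2 -> 0 < N ->
  0 <= k2 -> k2 <= p * (p * N) -> 0 <= k3 -> k3 <= p * k2 -> 0 <= k4 -> k4 <= p * k3 ->
  (k2 = 0 \/ p ^+ 2 * N <= 2 * k2) ->
  -1 <= P3 -> P3 <= 1 -> 0 <= P4 -> P4 <= 1 ->
  let M2 := k2 * (S ^+ 2 - 1) + p * N in
  let M4 := k4 * (S ^+ 4 - 6 * S ^+ 2 + 3 + 8 * S * P3 - 6 * P4)
          + 6 * k3 * (S ^+ 2 - 1 - 2 * S * P3 + 2 * P4)
          + 4 * k2 * (S * P3 - P4) + 3 * k2 * (1 - P4) + p * N * P4 in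
  p * N * M4 <= 100 * M2 ^+ 2 /\ p * N / 2 + k2 * S ^+ 2 <= M2.
Proof.
move=> p0 p2 N0 k20 k2p k30 k3p k40 k4p k2c P3l P3u P40 P41 M2 M4.
set s2 := S ^+ 2.
have s20 : 0 <= s2 by rewrite /s2 sqr_ge0.
have s4e : S ^+ 4 = s2 ^+ 2 by rewrite /s2 -exprM.
have SP3u : S * P3 <= (s2 + 1) / 2.
  have : 0 <= (S - P3) ^+ 2 by apply: sqr_ge0.
  have : P3 ^+ 2 <= 1 by nra.
  rewrite /s2; nra.
have SP3l : - (S * P3) <= (s2 + 1) / 2.
  have : 0 <= (S + P3) ^+ 2 by apply: sqr_ge0.
  have : P3 ^+ 2 <= 1 by nra.
  rewrite /s2; nra.
have k4b : k4 <= p ^+ 2 * k2 by nra.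
have k2b : k2 <= p / 2 * N by nra.
have tA : k4 * (S ^+ 4 - 6 * S ^+ 2 + 3 + 8 * S * P3 - 6 * P4) <= p ^+ 2 * k2 * s2 ^+ 2 + 7 * p ^+ 2 * k2.
  have h : S ^+ 4 - 6 * S ^+ 2 + 3 + 8 * S * P3 - 6 * P4 <= s2 ^+ 2 + 7.
    rewrite s4e -/s2; nra.
  have h0 : 0 <= s2 ^+ 2 + 7 by nra.
  apply: (le_trans (ler_wpM2l k40 h)).
  have : k4 * (s2 ^+ 2 + 7) <= p ^+ 2 * k2 * (s2 ^+ 2 + 7) by apply: ler_wpM2r.
  lra.
have tB : 6 * k3 * (S ^+ 2 - 1 - 2 * S * P3 + 2 * P4) <= 12 * p * k2 * s2 + 12 * p * k2.
  have h : S ^+ 2 - 1 - 2 * S * P3 + 2 * P4 <= 2 * s2 + 2 by rewrite -/s2; nra.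
  have : 6 * k3 * (S ^+ 2 - 1 - 2 * S * P3 + 2 * P4) <= 6 * k3 * (2 * s2 + 2).
    by apply: ler_wpM2l => //; lra.
  have : k3 * (2 * s2 + 2) <= p * k2 * (2 * s2 + 2) by apply: ler_wpM2r => //; lra.
  lra.
have tC : 4 * k2 * (S * P3 - P4) <= 2 * k2 * s2 + 2 * k2.
  have : 4 * k2 * (S * P3 - P4) <= 4 * k2 * ((s2 + 1) / 2) by apply: ler_wpM2l; lra.
  lra.
have tD : 3 * k2 * (1 - P4) <= 3 * k2 by nra.
have tE : p * N * P4 <= p * N by nra.
have M4b : M4 <= p ^+ 2 * k2 * s2 ^+ 2 + (12 * p + 2) * k2 * s2 + 13 * p * N.
  have : (7 * p ^+ 2 + 12 * p + 5) * k2 <= 12 * p * N by nra.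
  rewrite /M4; lra.
have M2b : p * N / 2 + k2 * s2 <= M2 by rewrite /M2 -/s2; nra.
split; last by [].
have M2p : 0 <= p * N / 2 + k2 * s2 by nra.
have M2sq : (p * N / 2 + k2 * s2) ^+ 2 <= M2 ^+ 2.
  by rewrite ler_sqr // ?nnegrE //; apply: le_trans M2b.
have pNM4 : p * N * M4 <= p * N * (p ^+ 2 * k2 * s2 ^+ 2 + (12 * p + 2) * k2 * s2 + 13 * p * N).
  by apply: ler_wpM2l => //; nra.
have t1 : p * N * (p ^+ 2 * k2 * s2 ^+ 2) <= 100 * (k2 * s2) ^+ 2.
  case: k2c => [-> | h]; first by nra.
  have : p * N * (p ^+ 2 * k2 * s2 ^+ 2) = p * (p ^+ 2 * N) * k2 * s2 ^+ 2 by ring.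
  have : 0 <= k2 * s2 ^+ 2 by nra.
  have : p * (p ^+ 2 * N) * k2 * s2 ^+ 2 <= p * (2 * k2) * k2 * s2 ^+ 2.
    have e : p * (p ^+ 2 * N) <= p * (2 * k2) by nra.
    have hh : 0 <= k2 * s2 ^+ 2 by nra.
    have := ler_wpM2r hh e; rewrite !mulrA //.
  nra.
have t2 : p * N * ((12 * p + 2) * k2 * s2) <= 100 * (2 * (p * N / 2) * (k2 * s2)).
  have h : 0 <= p * N * k2 * s2 by apply: mulr_ge0 => //; apply: mulr_ge0 => //; apply: mulr_ge0; lra.
  have -> : p * N * ((12 * p + 2) * k2 * s2) = (12 * p + 2) * (p * N * k2 * s2) by ring.
  have -> : 100 * (2 * (p * N / 2) * (k2 * s2)) = 100 * (p * N * k2 * s2) by field.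
  by apply: ler_wpM2r => //; lra.
have t3 : p * N * (13 * p * N) <= 100 * (p * N / 2) ^+ 2 by nra.
have : (p * N / 2 + k2 * s2) ^+ 2 = (p * N / 2) ^+ 2 + 2 * (p * N / 2) * (k2 * s2) + (k2 * s2) ^+ 2 by ring.
nra.
Qed.
End Key.

Section PZ.
Variable R : realType.

Lemma pz (T : finType) (D : {set T}) (Y2 : T -> R) (p : R) :
  0 < p -> (forall x, 0 <= Y2 x) ->
  0 < \sum_(x in D) Y2 x ->
  p * #|D|%:R * (\sum_(x in D) Y2 x ^+ 2) <= 100 * (\sum_(x in D) Y2 x) ^+ 2 ->
  p * #|D|%:R <= 400 * #|[set x in D | \sum_(y in D) Y2 y <= 2 * #|D|%:R * Y2 x]|%:R.
Proof.
move=> p0 Y0 M2p H.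
set N := #|D|%:R; set M2 := \sum_(x in D) Y2 x; set M4 := \sum_(x in D) Y2 x ^+ 2.
move: H; rewrite -/M2 -/M4 => H.
set G := [set x in D | M2 <= 2 * N * Y2 x].
set g := #|G|%:R.
have N0 : 0 < N.
  rewrite /N ltr0n lt0n; apply/negP => /eqP /cards0_eq D0.
  by move: M2p; rewrite /M2 D0 big_set0 ltxx.
have split2 : M2 = \sum_(x in D | M2 <= 2 * N * Y2 x) Y2 x
                 + \sum_(x in D | ~~ (M2 <= 2 * N * Y2 x)) Y2 x.
  by rewrite -(bigID (fun x => M2 <= 2 * N * Y2 x)).
move: H; rewrite -/N => H.
have sG : \sum_(x in D | M2 <= 2 * N * Y2 x) Y2 x = \sum_(x in G) Y2 x.
  by apply: eq_bigl => x; rewrite /G inE.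
have bad : 2 * N * \sum_(x in D | ~~ (M2 <= 2 * N * Y2 x)) Y2 x <= N * M2.
  rewrite mulr_sumr.
  apply: le_trans (_ : \sum_(x in D | ~~ (M2 <= 2 * N * Y2 x)) M2 <= _).
    by apply: ler_sum => x /andP[_]; rewrite -ltNge => /ltW.
  apply: le_trans (_ : \sum_(x in D) M2 <= _).
    rewrite [X in _ <= X](bigID (fun x => M2 <= 2 * N * Y2 x)) /= lerDr.
    by apply: sumr_ge0 => x _; apply: ltW.
  by rewrite sumr_const /N mulr_natl.
have goodS : M2 <= 2 * \sum_(x in G) Y2 x.
  rewrite -sG.
  have : 2 * N * (M2 - \sum_(x in D | M2 <= 2 * N * Y2 x) Y2 x) <= N * M2.
    by rewrite {1}split2 addrC addKr.
  nra.
have GD : \sum_(x in G) Y2 x ^+ 2 <= M4.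
  have sG2 : \sum_(x in D | M2 <= 2 * N * Y2 x) Y2 x ^+ 2 = \sum_(x in G) Y2 x ^+ 2.
    by apply: eq_bigl => x; rewrite /G inE.
  rewrite -sG2 /M4 [X in _ <= X](bigID (fun x => M2 <= 2 * N * Y2 x)) /= lerDl.
  by apply: sumr_ge0 => x _; apply: sqr_ge0.
set b := 100 * M2 / (p * N).
have bpN : b * (p * N) = 100 * M2 by rewrite /b mulfVK //; apply: lt0r_neq0; apply: mulr_gt0.
have b0 : 0 < b by rewrite /b; apply: divr_gt0; [apply: mulr_gt0 | apply: mulr_gt0].
have ineq : 4 * b * \sum_(x in G) Y2 x <= M4 + 4 * b ^+ 2 * g.
  apply: le_trans (_ : \sum_(x in G) (Y2 x ^+ 2 + 4 * b ^+ 2) <= _).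
    rewrite mulr_sumr; apply: ler_sum => x _.
    have : 0 <= (Y2 x - 2 * b) ^+ 2 by apply: sqr_ge0.
    nra.
  by rewrite big_split /= sumr_const; apply: lerD => //; rewrite /g mulr_natr.
have e1 : 2 * b * M2 <= M4 + 4 * b ^+ 2 * g by nra.
have e2 : 200 * M2 ^+ 2 <= p * N * M4 + 400 * b * M2 * g.
  have : p * N * (2 * b * M2) <= p * N * (M4 + 4 * b ^+ 2 * g).
    by apply: ler_wpM2l => //; apply: ltW; apply: mulr_gt0.
  have -> : p * N * (2 * b * M2) = 2 * M2 * (b * (p * N)) by ring.
  have -> : p * N * (M4 + 4 * b ^+ 2 * g) = p * N * M4 + 4 * b * g * (b * (p * N)) by ring.
  rewrite bpN; nra.
have e3 : 100 * M2 <= 400 * b * g.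
  have h : M2 * (100 * M2) <= M2 * (400 * b * g) by nra.
  by rewrite ler_pM2l in h.
have : 100 * M2 * (p * N) <= 400 * g * (b * (p * N)).
  have -> : 400 * g * (b * (p * N)) = 400 * b * g * (p * N) by ring.
  by apply: ler_wpM2r => //; apply: ltW; apply: mulr_gt0.
rewrite bpN.
have -> : 100 * M2 * (p * N) = (p * N) * (100 * M2) by ring.
rewrite ler_pM2r //; apply: mulr_gt0 => //.
Qed.
End PZ.

Section Row.
Variable R : realType.

Lemma kap_leR (n d t : nat) : (d <= n)%N ->
  (kap t.+1 n d)%:R <= d%:R / n%:R * (kap t n d)%:R :> R.
Proof.
move=> dn.
case: (leqP d t) => dt.
  rewrite kap_zero // mulr_ge0 // divr_ge0 //.
have n0 : (0 < n)%N by lia.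
rewrite mulrAC ler_pdivlMr ?ltr0n // -!natrM ler_nat.
by apply: kap_le => //; lia.
Qed.

Lemma PwT (n k : nat) (v : 'I_n -> R) : Pw v k [set: 'I_n] = \sum_i v i ^+ k.
Proof. by rewrite /Pw; apply: eq_bigl => i; rewrite finset.in_setT. Qed.

Lemma row_anti (n d : nat) (v : 'I_n -> R) :
  (0 < d)%N -> (2 * d <= n)%N -> \sum_i v i ^+ 2 = 1 ->
  d%:R / n%:R * 'C(n, d)%:R <=
  400 * #|[set A : {set 'I_n} | (#|A| == d) && (d%:R / n%:R / 4 <= Pw v 1 A ^+ 2)]|%:R :> R.
Proof.
move=> d0 dn v2.
set p : R := d%:R / n%:R.
have n0 : (0 < n)%N by lia.
have p0 : 0 < p by rewrite /p divr_gt0 // ltr0n.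
have p2 : p <= 1 / 2.
  have h : (2 * d)%:R <= n%:R :> R by rewrite ler_nat.
  rewrite natrM in h; rewrite /p ler_pdivrMr ?ltr0n //; lra.
set T := [set: 'I_n].
set D := [set A : {set 'I_n} | A \subset T & #|A| == d].
have cD : #|D| = 'C(n, d) by rewrite cards_draws /T cardsT card_ord.
set N : R := 'C(n, d)%:R.
have N0 : 0 < N by rewrite /N ltr0n bin_gt0; lia.
set k1 : R := (kap 1 n d)%:R.
set k2 : R := (kap 2 n d)%:R.
set k3 : R := (kap 3 n d)%:R.
set k4 : R := (kap 4 n d)%:R.
set S := Pw v 1 T.
set P2 := Pw v 2 T.
set P3 := Pw v 3 T.
set P4 := Pw v 4 T.
have P2e : P2 = 1 by rewrite /P2 PwT.
have vb : forall i, v i ^+ 2 <= 1.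
  move=> i; rewrite -v2 (bigD1 i) //= lerDl; apply: sumr_ge0 => j _; apply: sqr_ge0.
have vb2 : forall i, -1 <= v i <= 1.
  move=> i; have := vb i; rewrite expr2 => h; apply/andP; split.
    by apply: contraTT h; rewrite -!ltNge => h; nra.
  by apply: contraTT h; rewrite -!ltNge => h; nra.
have P3l : -1 <= P3.
  rewrite -P2e /P2 /P3 /Pw -sumrN; apply: ler_sum => i _.
  have /andP[h1 h2] := vb2 i; have h3 := sqr_ge0 (v i).
  rewrite exprSr; have : 0 <= v i ^+ 2 * (v i + 1) by apply: mulr_ge0; lra.
  lra.
have P3u : P3 <= 1.
  rewrite -P2e /P2 /P3 /Pw; apply: ler_sum => i _.
  have /andP[h1 h2] := vb2 i; have h3 := sqr_ge0 (v i).
  rewrite exprSr; have : 0 <= v i ^+ 2 * (1 - v i) by apply: mulr_ge0; lra.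
  lra.
have P40 : 0 <= P4.
  rewrite /P4 /Pw; apply: sumr_ge0 => i _.
  by rewrite (_ : 4%N = (2 * 2)%N) // exprM sqr_ge0.
have P41 : P4 <= 1.
  rewrite -P2e /P2 /P4 /Pw; apply: ler_sum => i _.
  have := vb i; have := sqr_ge0 (v i).
  rewrite (_ : 4%N = (2 * 2)%N) // exprM; nra.
have k1e : k1 = p * N.
  rewrite /k1 /p /N; apply: (mulIf (_ : n%:R != 0)); first by rewrite pnatr_eq0; lia.
  rewrite -natrM kap1 /= natrM; field; rewrite pnatr_eq0; lia.
have dn' : (d <= n)%N by lia.
have k20 : 0 <= k2 by [].
have k30 : 0 <= k3 by [].
have k40 : 0 <= k4 by [].
have k2p : k2 <= p * (p * N) by rewrite -k1e; apply: kap_leR.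
have k3p : k3 <= p * k2 by apply: kap_leR.
have k4p : k4 <= p * k3 by apply: kap_leR.
have k2c : k2 = 0 \/ p ^+ 2 * N <= 2 * k2.
  case: (leqP d 1) => d1.
    by left; rewrite /k2 kap_zero.
  right; have := kap2_lb d1 dn'.
  rewrite -(ler_nat R) !natrM -/N -/k2 => h.
  have nn : 0 < n%:R ^+ 2 :> R by rewrite exprn_gt0 // ltr0n.
  rewrite -(ler_pM2r nn).
  have pn : p * n%:R = d%:R by rewrite /p mulfVK // pnatr_eq0 -lt0n.
  rewrite -pn in h; move: h; move: (p) (N) (k2) => p' N' k2' h.
  have -> : p' ^+ 2 * N' * n%:R ^+ 2 = p' * n%:R * (p' * n%:R) * N' by ring.
  have -> : 2 * k2' * n%:R ^+ 2 = 2%:R * k2' * n%:R * n%:R by ring.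
  exact: h.
have [KI M2b] := key_ineq S p0 p2 N0 k20 k2p k30 k3p k40 k4p k2c P3l P3u P40 P41.
have M2e : \sum_(A in D) Pw v 1 A ^+ 2 = k2 * (S ^+ 2 - 1) + p * N.
  under eq_bigr do rewrite Y2_expand.
  rewrite big_split /D !count_D -/T /T cardsT card_ord -/k1 -/k2 -/k3 -/k4.
  rewrite (@D2' _ _ v 1 1 2) // D1 -/T -/S -/P2 P2e k1e /=.
  move: (k2) (S) (p) (N) => k2' S' p' N'; ring.
have M4e : \sum_(A in D) (Pw v 1 A ^+ 2) ^+ 2 =
   k4 * (S ^+ 4 - 6 * S ^+ 2 + 3 + 8 * S * P3 - 6 * P4)
          + 6 * k3 * (S ^+ 2 - 1 - 2 * S * P3 + 2 * P4)
          + 4 * k2 * (S * P3 - P4) + 3 * k2 * (1 - P4) + p * N * P4.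
  under eq_bigr do rewrite -exprM Y4_expand.
  rewrite !big_split -!mulr_sumr /D !count_D -/T /T cardsT card_ord -/k1 -/k2 -/k3 -/k4.
  rewrite D4 D211 (@D2' _ _ v 3 1 4) // (@D2' _ _ v 2 2 4) // D1 -/T -/S -/P2 -/P3 -/P4 P2e k1e /=.
  move: (k2) (k3) (k4) (S) (P3) (P4) (p) (N) => k2' k3' k4' S' P3' P4' p' N'; ring.
have M2pos : 0 < \sum_(A in D) Pw v 1 A ^+ 2.
  rewrite M2e; apply: lt_le_trans M2b.
  apply: ltr_wpDr; first by apply: mulr_ge0 => //; apply: sqr_ge0.
  by apply: divr_gt0 => //; apply: mulr_gt0.
have := @pz R _ D (fun A => Pw v 1 A ^+ 2) p p0 (fun A => sqr_ge0 _) M2pos.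
rewrite cD -/N M2e M4e => /(_ KI) H.
apply: (le_trans H); rewrite ler_pM2l // ler_nat; apply: subset_leq_card.
apply/fintype.subsetP => A; rewrite !inE => /andP[/andP[_ cA] HA]; rewrite cA /=.
have : p * N / 2 <= 2 * N * Pw v 1 A ^+ 2.
  apply: le_trans HA; apply: le_trans M2b; rewrite lerDl; apply: mulr_ge0 => //; apply: sqr_ge0.
rewrite -/p; move: (p) (N) N0 => p' N' N0'.
set y := Pw v 1 A ^+ 2; move: y => y h.
have h2 : N' * (p' / 4) <= N' * y by nra.
by rewrite ler_pM2l in h2.
Qed.
End Row.

Section Main.
Variable R : realType.

Lemma sum_prod (m n d : nat) (F : {set 'I_n} -> R) :
  \sum_(S in rows_dsparse m n d) \prod_i F (S i)
  = (\sum_(A : {set 'I_n} | #|A| == d) F A) ^+ m.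
Proof.
rewrite -[in RHS](card_ord m) -prodr_const.
rewrite (bigA_distr_big (fun A : {set 'I_n} => #|A| == d) (fun (i : 'I_m) A => F A)).
apply: eq_bigl => S; rewrite /rows_dsparse inE.
apply/forallP/familyP => H i; exact: H i.
Qed.

Lemma sum_draws_const n d (x : R) :
  \sum_(A : {set 'I_n} | #|A| == d) x = x *+ 'C(n, d).
Proof.
rewrite sumr_const; congr (_ *+ _).
by rewrite -[in RHS](card_ord n) -card_draws; apply: eq_card => A; rewrite inE.
Qed.

Lemma card_rowsR (m n d : nat) : #|rows_dsparse m n d|%:R = ('C(n, d)%:R) ^+ m :> R.
Proof.
have e : \sum_(S in rows_dsparse m n d) \prod_(i < m) (1 : R) = #|rows_dsparse m n d|%:R.
  by rewrite (eq_bigr (fun _ => 1)) ?sumr_const // => S _; rewrite prodr_const expr1n.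
by rewrite -e (sum_prod m d (fun _ => 1)) sum_draws_const.
Qed.

Lemma Mv_entry (m n : nat) (S : {ffun 'I_m -> {set 'I_n}}) (v : 'cV[R]_n) i :
  (bin_mx S *m v) i 0 = Pw (fun j => v j 0) 1 (S i).
Proof.
rewrite !mxE /Pw [RHS]big_mkcond /=; apply: eq_bigr => j _; rewrite /bin_mx !mxE.
by case: (j \in S i); rewrite ?mul1r ?mul0r ?expr1.
Qed.
End Main.

Unset Implicit Arguments.

Lemma weight_sum (R : realType) (p : R) (n d : nat) (vf : 'I_n -> R) :
  0 < p -> p = d%:R / n%:R -> (0 < d)%N -> (2 * d <= n)%N -> \sum_i vf i ^+ 2 = 1 ->
  \sum_(A : {set 'I_n} | #|A| == d) expR (- (4 / p * Pw vf 1 A ^+ 2))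
  <= 'C(n, d)%:R * expR (- (p / 800)).
Proof.
move=> p0 pe d0 dn v2.
have RA := row_anti d0 dn v2; rewrite -pe in RA.
set G := [set A : {set 'I_n} | (#|A| == d) && (p / 4 <= Pw vf 1 A ^+ 2)] in RA.
have e1 : expR (-1) <= 1 / 2 :> R.
  have h : 2 <= expR (1 : R) by have := expR_ge1Dx (1 : R); lra.
  by rewrite expRN mul1r lef_pV2 ?posrE ?expR_gt0.
have wb : forall A : {set 'I_n}, #|A| == d ->
    expR (- (4 / p * Pw vf 1 A ^+ 2)) <= 1 - 1 / 2 * (A \in G)%:R.
  move=> A cA; rewrite /G inE cA /=.
  have [h|h] := boolP (p / 4 <= Pw vf 1 A ^+ 2); rewrite ?h /=.
    rewrite (_ : 1 - 1 / 2 * 1 = 1 / 2 :> R); last by field.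
    apply: le_trans e1; rewrite ler_expR lerN2.
    have e : 4 / p * (p / 4) = 1 by field; apply: lt0r_neq0.
    by rewrite -{1}e; apply: ler_wpM2l => //; apply: divr_ge0 => //; apply: ltW.
  rewrite mulr0 subr0 -expR0 ler_expR oppr_le0; apply: mulr_ge0; last by apply: sqr_ge0.
  by apply: divr_ge0 => //; apply: ltW.
apply: le_trans (_ : \sum_(A : {set 'I_n} | #|A| == d) (1 - 1 / 2 * (A \in G)%:R) <= _).
  by apply: ler_sum => A cA; apply: wb.
rewrite sumrB sum_draws_const -mulr_sumr.
have -> : \sum_(A : {set 'I_n} | #|A| == d) (A \in G)%:R = #|G|%:R :> R.
  rewrite (eq_bigr (fun A => if A \in G then 1 else 0)); last by move=> A _; case: (A \in G).
  rewrite -big_mkcondr sumr_const; congr (_ *+ _); apply: eq_card => A.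
  rewrite unfold_in /= /G inE; by case: (#|A| == d).
have := expR_ge1Dx (- (p / 800)).
have N0 : 0 <= 'C(n, d)%:R :> R by [].
move: RA N0; move: (#|G|%:R) ('C(n, d)%:R) (expR (- (p / 800))) => g N E h1 N0 h2.
have h3 : N * (1 + - (p / 800)) <= N * E by apply: ler_wpM2l.
nra.
Qed.

Theorem lemma2p3 (R : realType) (p : R) :
  0 < p -> p <= 1 / 2 ->
  exists C c : R, 0 < C /\ 0 < c /\
    forall (n d m : nat) (v : 'cV[R]_n),
      (0 < d)%N -> (d <= n)%N -> d%:R = p * n%:R ->
      n%:R / 2 <= m%:R :> R -> (m <= n)%N ->
      vnorm v = 1 ->
      unif_prob (R:=R) (rows_dsparse m n d)
        (fun S => vnorm (bin_mx S *m v) <= c * Num.sqrt (p * n%:R))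
      <= expR (- (C * n%:R)).
Proof.
move=> p0 p2.
have g0 : 0 < p / 800 by apply: divr_gt0; lra.
exists (p / 800 / 4), (Num.sqrt (p / 800 / 16)).
split; first by apply: divr_gt0; lra.
split; first by rewrite sqrtr_gt0; apply: divr_gt0; lra.
move=> n d m v d0 dn dpn m2 mn vn.
have n0 : (0 < n)%N by lia.
have nR : 0 < n%:R :> R by rewrite ltr0n.
have pe : p = d%:R / n%:R by rewrite dpn mulfK // lt0r_neq0.
have d2n : (2 * d <= n)%N.
  rewrite -(ler_nat R) natrM dpn.
  have : p * n%:R <= 1 / 2 * n%:R by apply: ler_wpM2r => //; apply: ltW.
  lra.
set vf : 'I_n -> R := fun j => v j 0.
have v2 : \sum_i vf i ^+ 2 = 1.
  move: vn; rewrite /vnorm => h.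
  have h0 : 0 <= \sum_(i < n) v i 0 ^+ 2 by apply: sumr_ge0 => i _; apply: sqr_ge0.
  by rewrite -(sqr_sqrtr h0) h expr1n.
have WS := @weight_sum R p n d vf p0 pe d0 d2n v2.
set g := p / 800 in g0 WS *.
set w := fun A : {set 'I_n} => expR (- (4 / p * Pw vf 1 A ^+ 2)).
set Om := rows_dsparse m n d.
set Ev := fun S : {ffun 'I_m -> {set 'I_n}} =>
  vnorm (bin_mx S *m v) <= Num.sqrt (g / 16) * Num.sqrt (p * n%:R).
have onE : forall S, Ev S -> expR (- (g / 4 * n%:R)) <= \prod_i w (S i).
  have g16 : 0 <= g / 16 by apply: divr_ge0; [apply: ltW | lra].
  have pn0 : 0 <= p * n%:R by apply: mulr_ge0; [apply: ltW | apply: ltW].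
  move=> S; rewrite /Ev /vnorm -sqrtrM //.
  rewrite ler_sqrt; last by apply: mulr_ge0.
  rewrite (eq_bigr (fun i => Pw vf 1 (S i) ^+ 2)); last by move=> i _; rewrite (Mv_entry S v i).
  move=> hS.
  rewrite /w -expR_sum ler_expR sumrN lerN2 -mulr_sumr.
  have e : g / 4 * n%:R = 4 / p * (g / 16 * (p * n%:R)) by field; apply: lt0r_neq0.
  by rewrite e; apply: ler_wpM2l => //; apply: divr_ge0; [lra | apply: ltW].
have sumE : #|[set S in Om | Ev S]|%:R * expR (- (g / 4 * n%:R))
    <= \sum_(S in Om) \prod_i w (S i).
  rewrite mulr_natl -sumr_const.
  apply: le_trans (_ : \sum_(S in [set S in Om | Ev S]) \prod_i w (S i) <= _).
    by apply: ler_sum => T; rewrite inE => /andP[_ ]; apply: onE.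
  have -> : \sum_(S in [set S in Om | Ev S]) \prod_i w (S i) =
            \sum_(S in Om | Ev S) \prod_i w (S i).
    by apply: eq_bigl => T; rewrite inE.
  rewrite [X in _ <= X](bigID Ev).
  rewrite lerDl; apply: sumr_ge0 => S _; apply: prodr_ge0 => i _; apply: ltW; apply: expR_gt0.
rewrite /Om sum_prod in sumE.
have Wm : (\sum_(A : {set 'I_n} | #|A| == d) w A) ^+ m <= ('C(n, d)%:R * expR (- g)) ^+ m.
  apply: lerXn2r; last exact: WS.
    by rewrite nnegrE; apply: sumr_ge0 => A _; apply: ltW; apply: expR_gt0.
  by rewrite nnegrE; apply: mulr_ge0; [apply: ler0n | apply: ltW; apply: expR_gt0].
rewrite /unif_prob -/Om card_rowsR.
have Np : 0 < 'C(n, d)%:R ^+ m :> R by apply: exprn_gt0; rewrite ltr0n bin_gt0.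
rewrite ler_pdivrMr //.
have key : #|[set S in Om | Ev S]|%:R * expR (- (g / 4 * n%:R))
    <= 'C(n, d)%:R ^+ m * expR (- (g * m%:R)).
  have -> : 'C(n, d)%:R ^+ m * expR (- (g * m%:R)) = ('C(n, d)%:R * expR (- g)) ^+ m :> R.
    by rewrite exprMn -expRM_natr mulNr.
  exact: le_trans sumE Wm.
move: key; set a := expR (- (g / 4 * n%:R)); set E := #|_|%:R => key.
have a0 : 0 < a by apply: expR_gt0.
have E1 : expR (- (g * m%:R)) = a * expR (- (g * m%:R) + g / 4 * n%:R).
  by rewrite /a -expRD; congr expR; ring.
have E2 : expR (- (g * m%:R) + g / 4 * n%:R) <= a.
  rewrite /a ler_expR.
  have : g * (n%:R / 2) <= g * m%:R by apply: ler_wpM2l => //; apply: ltW.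
  lra.
rewrite E1 in key.
have key2 : E <= 'C(n, d)%:R ^+ m * expR (- (g * m%:R) + g / 4 * n%:R).
  have : a * E <= a * ('C(n, d)%:R ^+ m * expR (- (g * m%:R) + g / 4 * n%:R)).
    by move: key; rewrite mulrC; move: (expR _) => b; rewrite mulrCA.
  by rewrite ler_pM2l.
apply: (le_trans key2); rewrite [X in _ <= X]mulrC; apply: ler_wpM2l; [apply: exprn_ge0; apply: ler0n | exact: E2].
Qed.
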